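(* Let $u\in\Lambda$ and $(h,\beta)\in\Gamma(u)$. Then for every $j\in\mathbb N$, $\mathbf K^s_u\le\lfloor\mathfrak F_u(j,h,\beta)\rfloor$ (with $\lfloor+\infty\rfloor=+\infty$). Moreover, if $\mathcal S(u,h)\neq\emptyset$, then $\min_{k\in\mathcal S(u,h)}\mathfrak F_u(k,h,\beta)=\mathfrak F_u(\mathbf K^s_u,h,\beta)$.
   Context: $\Lambda$: real sequences with $\sup_n u_n<+\infty$. $\Delta^s_u=\{k:\max_{0\le j\le k}u_j>\sup_{j>k}u_j\}$, $\mathbf K^s_u=\inf\Delta^s_u$ ($\inf\emptyset=+\infty$). $\Omega([0,1])$: functions $h:\mathbb R\to\mathbb R$ whose restriction to $[0,1]$ is strictly increasing and continuous; $h^{-1}_{[0,1]}$ the inverse of that restriction. $\Gamma(u)=\{(h,\beta)\in\Omega([0,1])\times(0,1):u_k\le h(\beta^k)\ \forall k\}$; $\mathcal S(u,h)=\{k:u_k>h(0)\}$. $\mathfrak F_u(k,h,\beta)=\ln(h^{-1}_{[0,1]}(u_k))/\ln\beta$ if $(h,\beta)\in\Gamma(u)$ and $k\in\mathcal S(u,h)$, and $+\infty$ otherwise. *)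

(* Defs.v *)
From HB Require Import structures.
From mathcomp Require Import all_boot all_order all_algebra.
From mathcomp Require Import all_classical all_reals all_analysis.
Set Implicit Arguments. Unset Strict Implicit. Unset Printing Implicit Defensive.
Import Order.TTheory GRing.Theory Num.Theory.
Import numFieldNormedType.Exports.
Local Open Scope classical_set_scope.
Local Open Scope ring_scope.

Section Defs.
Variable R : realType.

Definition Lambda (u : nat -> R) : Prop := exists M : R, forall n, u n <= M.

Definition maxUpTo (u : nat -> R) (k : nat) : R :=
  \big[Num.max/u 0%N]_(j < k.+1) u j.

Definition supAfter (u : nat -> R) (k : nat) : R :=
  sup [set u j | j in [set j : nat | (k < j)%N]].

Definition DeltaS (u : nat -> R) : set nat :=
  [set k | maxUpTo u k > supAfter u k].

(* K^s_u = inf Delta^s_u in N u {+oo}; None stands for +oo (inf of empty set) *)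
Definition KS (u : nat -> R) : option nat :=
  match pselect (exists k, DeltaS u k) with
  | left ex => Some (ex_minn (P := fun k => `[< DeltaS u k >])
                      (let: ex_intro k hk := ex in ex_intro _ k (asboolT hk)))
  | right _ => None
  end.

Definition onat_to_ereal (o : option nat) : \bar R :=
  if o is Some k then (k%:R)%:E else +oo%E.

Definition Omega01 (h : R -> R) : Prop :=
  {within `[0, 1], continuous h} /\
  (forall x y, x \in `[0, 1] -> y \in `[0, 1] -> x < y -> h x < h y).

(* inverse of the restriction of h to [0,1] (junk value 0 off h([0,1])) *)
Definition hinv01 (h : R -> R) (y : R) : R :=
  xget 0 [set x | x \in `[0, 1] /\ h x = y].

Definition Gamma (u : nat -> R) (h : R -> R) (b : R) : Prop :=
  Omega01 h /\ 0 < b < 1 /\ (forall k, u k <= h (b ^+ k)).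

Definition SS (u : nat -> R) (h : R -> R) : set nat := [set k | u k > h 0].

Definition Ffun (u : nat -> R) (k : nat) (h : R -> R) (b : R) : \bar R :=
  if `[< Gamma u h b /\ SS u h k >]
  then (ln (hinv01 h (u k)) / ln b)%:E
  else +oo%E.

(* F_u evaluated at an index in N u {+oo}; the index +oo is not in S(u,h) *)
Definition Ffun_o (u : nat -> R) (k : option nat) (h : R -> R) (b : R) : \bar R :=
  if k is Some k' then Ffun u k' h b else +oo%E.

Definition efloor (x : \bar R) : \bar R :=
  match x with
  | r%:E => ((Num.floor r)%:~R)%:E
  | +oo%E => +oo%E
  | -oo%E => -oo%E
  end.

End Defs.

(* Main.v *)
Require Import Defs.
From HB Require Import structures.
From mathcomp Require Import all_boot all_order all_algebra.
From mathcomp Require Import all_classical all_reals all_analysis.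
Import Order.TTheory GRing.Theory Num.Theory.
Local Open Scope classical_set_scope.
Local Open Scope ring_scope.

Set Implicit Arguments. Unset Strict Implicit.
Section Helpers.
Variables (R : realType) (u : nat -> R) (h : R -> R) (b : R).

Lemma maxUpToE k : maxUpTo u k = \big[Num.max/u 0%N]_(j <- iota 0 k.+1) u j.
Proof. by rewrite /maxUpTo -(big_mkord xpredT). Qed.
Lemma bigmax_ge (x0 : R) s i : (i \in s) -> u i <= \big[Num.max/x0]_(j <- s) u j.
Proof.
elim: s => [//|a s IH]; rewrite inE big_cons le_max => /orP[/eqP->|/IH->];
  by rewrite ?lexx ?orbT.
Qed.
Lemma bigmax_in (x0 : R) s : \big[Num.max/x0]_(j <- s) u j = x0 \/
  exists2 i, i \in s & \big[Num.max/x0]_(j <- s) u j = u i.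
Proof.
elim: s => [|a s IH]; first by rewrite big_nil; left.
rewrite big_cons; case: (leP (u a) (\big[Num.max/x0]_(j <- s) u j)) => H.
    case: IH => [->|[i Hi ->]]; first by left.
  by right; exists i; rewrite // inE Hi orbT.
by right; exists a; rewrite ?inE ?eqxx.
Qed.
Lemma maxUpTo_ge k i : (i <= k)%N -> u i <= maxUpTo u k.
Proof. by move=> hi; rewrite maxUpToE bigmax_ge // mem_iota. Qed.
Lemma maxUpTo_in k : exists2 i, (i <= k)%N & maxUpTo u k = u i.
Proof.
rewrite maxUpToE; case: (bigmax_in (u 0%N) (iota 0 k.+1)) => [->|[i Hi ->]].
  by exists 0%N.
by move: Hi; rewrite mem_iota add0n ltnS => Hi; exists i.
Qed.

Lemma KS_spec : (exists k, DeltaS u k) ->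
  exists K, KS u = Some K /\ DeltaS u K /\ forall n, DeltaS u n -> (K <= n)%N.
Proof.
move=> ex; rewrite /KS; case: pselect => [ex'|nex]; last by exfalso; apply: nex.
case: ex_minnP => m /asboolP Hm Hmin; exists m; split => //; split => //.
by move=> n Hn; apply: Hmin; apply/asboolP.
Qed.

Hypothesis hG : Gamma u h b.

Lemma hmono x y : x \in `[0, 1] -> y \in `[0, 1] -> x < y -> h x < h y.
Proof. by case: hG => [[_ H] _]; apply: H. Qed.

Lemma hmonoW x y : x \in `[0, 1] -> y \in `[0, 1] -> x <= y -> h x <= h y.
Proof.
move=> hx hy; rewrite le_eqVlt => /orP[/eqP ->|lt]; first by [].
exact/ltW/hmono.
Qed.

Lemma b01 : 0 < b < 1.
Proof. by case: hG => _ []. Qed.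

Lemma bk01 k : b ^+ k \in `[0, 1].
Proof.
have /andP[b0 b1] := b01.
rewrite in_itv /=; apply/andP; split; [apply: exprn_ge0 | apply: exprn_ile1] => //; exact: ltW.
Qed.

Lemma hinv_spec k : h 0 < u k ->
  let x := hinv01 h (u k) in 0 < x /\ x <= 1 /\ h x = u k /\ x <= b ^+ k.
Proof.
move=> hk x.
case: hG => [[hc _] [_ hub]].
have i0 : (0:R) \in `[0, 1] by rewrite in_itv /= lexx ler01.
have i1 : (1:R) \in `[0, 1] by rewrite in_itv /= lexx ler01.
have h01 : h 0 < h 1 by apply: hmono => //; exact: ltr01.
have hk1 : u k <= h 1.
  apply: (le_trans (hub k)); apply: hmonoW; first exact: bk01; first exact: i1.
  by move: (bk01 k); rewrite in_itv /= => /andP[].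
have ex : exists x, [set x | x \in `[0, 1] /\ h x = u k] x.
  have [c hc1 hc2] : exists2 c, c \in `[0, 1] & h c = u k.
    apply: (@IVT R h 0 1 (u k) ler01 hc).
    by rewrite min_l ?max_r ?(ltW h01) // (ltW hk) hk1.
  by exists c.
have [xi hx] : x \in `[0, 1] /\ h x = u k := xgetPex 0 ex.
have /andP[x0 x1] : 0 <= x <= 1 by move: xi; rewrite in_itv.
split.
  rewrite lt_neqAle x0 andbT; apply/eqP => x0'.
  by move: hk; rewrite -hx -x0' ltxx.
split => //; split => //.
rewrite leNgt; apply/negP => lt.
have := hmono (bk01 k) xi lt; rewrite hx => H.
by move: (hub k); rewrite leNgt H.
Qed.

Lemma Fval k : SS u h k ->
  Ffun u k h b = (ln (hinv01 h (u k)) / ln b)%:E.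
Proof. by move=> hk; rewrite /Ffun asboolT. Qed.

Lemma Fnot k : ~ SS u h k -> Ffun u k h b = +oo%E.
Proof. by move=> hk; rewrite /Ffun asboolF // => -[]. Qed.

Lemma lnb_lt0 : ln b < 0.
Proof. exact: ln_lt0 b01. Qed.

Lemma core j : SS u h j -> exists m : nat,
  Num.floor (ln (hinv01 h (u j)) / ln b) = m%:Z /\ DeltaS u m.
Proof.
move=> hj.
have [x0 [x1 [hx xb]]] := hinv_spec hj.
set x := hinv01 h (u j) in x0 x1 hx xb *.
set F := ln x / ln b.
have /andP[b0 b1] := b01.
have xpos : x \in Num.pos by rewrite posrE.
have bpos n : b ^+ n \in Num.pos by rewrite posrE exprn_gt0.
have jF : (j%:R : R) <= F.
  rewrite /F ler_ndivlMr ?lnb_lt0 // mulr_natl -lnXn //.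
  by rewrite ler_ln.
have jz : (j%:Z <= Num.floor F)%R by rewrite floor_ge_int.
have [m Hm] : exists m : nat, Num.floor F = m%:Z.
  exists `|Num.floor F|%N; rewrite gez0_abs //.
  exact: le_trans jz.
exists m; split => //.
have jm : (j <= m)%N by move: jz; rewrite Hm lez_nat.
have Fm : F < (m.+1)%:R.
  have := floorD1_gt F; rewrite Hm.
  have -> : (m%:Z + 1 = (m.+1)%:Z)%R by rewrite -addn1 PoszD.
  by rewrite pmulrn.
have bx : b ^+ m.+1 < x.
  rewrite -ltr_ln //; move: Fm; rewrite /F ltr_ndivrMr ?lnb_lt0 //.
  by rewrite lnXn // mulr_natl.
have xi : x \in `[0, 1] by rewrite in_itv /= ltW.
have hb := hmono (bk01 m.+1) xi bx; rewrite hx in hb.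
rewrite /DeltaS /=.
apply: (le_lt_trans _ (lt_le_trans hb (maxUpTo_ge jm))).
apply: ge_sup; first by exists (u m.+1); exists m.+1 => /=.
move=> _ [i /= Hi <-].
case: hG => [_ [_ hub]]; apply: (le_trans (hub i)).
apply: hmonoW; [exact: bk01 | exact: bk01 |].
by apply: ler_wiXn2l; rewrite ?ltW.
Qed.

End Helpers.
Unset Implicit Arguments.

Theorem mainTheorem6 (R : realType) (u : nat -> R) (h : R -> R) (b : R) :
  Lambda u -> Gamma u h b ->
  (forall j : nat, (onat_to_ereal R (KS u) <= efloor (Ffun u j h b))%E) /\
  (SS u h !=set0 ->
     (exists2 k0, SS u h k0 & Ffun u k0 h b = Ffun_o u (KS u) h b) /\
     (forall k, SS u h k -> (Ffun_o u (KS u) h b <= Ffun u k h b)%E)).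
Proof.
move=> hL hG; split.
  move=> j; have [hj|hj] := pselect (SS u h j); last first.
    by rewrite Fnot //= leey.
  have [m [Hm Dm]] := core hG hj.
  have [K [-> [_ Kmin]]] := KS_spec (ex_intro _ m Dm).
  rewrite Fval //= Hm /= lee_fin pmulrn ler_nat.
  exact: Kmin.
move=> [j hj].
have [m [_ Dm]] := core hG hj.
have [K [-> [DK Kmin]]] := KS_spec (ex_intro _ m Dm).
have [Mb hMb] := hL.
have hub : has_ubound [set u i | i in [set i : nat | (K < i)%N]].
  by exists Mb => _ [i _ <-].
have MK : maxUpTo u K <= u K.
  rewrite leNgt; apply/negP => lt.
  have [i iK Mi] := maxUpTo_in u K.
  have iK' : (i < K)%N.
    rewrite ltn_neqAle iK andbT; apply/eqP => iKe.
    by move: lt; rewrite Mi iKe ltxx.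
  move: iK iK' lt Mi Kmin DK hub; case: K => [//|K] iK iK' lt Mi Kmin DK hub.
  have MK' : maxUpTo u K.+1 <= maxUpTo u K by rewrite Mi; apply: maxUpTo_ge.
  have : DeltaS u K.
    rewrite /DeltaS /=.
    apply: (le_lt_trans _ (_ : Num.max (u K.+1) (supAfter u K.+1) < _)).
      apply: ge_sup; first by exists (u K.+1); exists K.+1 => /=.
      move=> _ [i0 /= Hi <-]; rewrite le_max.
      move: Hi; rewrite leq_eqVlt => /orP[/eqP <-|Hi]; first by rewrite lexx.
      by rewrite (ub_le_sup hub) ?orbT //; exists i0.
    by rewrite gt_max (lt_le_trans lt MK') (lt_le_trans DK MK').
  by move=> /Kmin; rewrite ltnn.
have umax i : u i <= u K.
  case: (leqP i K) => Hi; first by apply: le_trans MK; apply: maxUpTo_ge.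
  apply: le_trans MK; apply/ltW/(le_lt_trans _ DK).
  by apply: (ub_le_sup hub); exists i.
have SK : SS u h K by rewrite /SS /=; apply: lt_le_trans (umax j).
split; first by exists K.
move=> k hk; rewrite /= !Fval // lee_fin.
have [xk0 [_ [hxk _]]] := hinv_spec hG hk.
have [xK0 [xK1 [hxK _]]] := hinv_spec hG SK.
have [_ [xk1 _]] := hinv_spec hG hk.
have xkK : hinv01 h (u k) <= hinv01 h (u K).
  rewrite leNgt; apply/negP => lt.
  have iK : hinv01 h (u K) \in `[0, 1] by rewrite in_itv /= ltW.
  have ik : hinv01 h (u k) \in `[0, 1] by rewrite in_itv /= ltW.
  have := hmono hG iK ik lt; rewrite hxk hxK.
  by rewrite ltNge umax.
have lnle : ln (hinv01 h (u k)) <= ln (hinv01 h (u K)).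
  by rewrite ler_ln ?posrE.
have lb := lnb_lt0 hG.
rewrite ler_ndivrMr // divfK ?lt_eqF //.
Qed.
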